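(* Let $\mathcal{C}$ be a finite set and $\mathcal{T}$ a finite set, and let $(Y,T)$ be a pair of random variables with joint distribution $P_{Y,T}$ on $\mathcal{C}\times\mathcal{T}$, where $P_Y(y)>0$ for every $y\in\mathcal{C}$. For a nonempty subset $A\subseteq\mathcal{C}$ let $P_{T|Y\in A}$ denote the conditional distribution of $T$ given the event $\{Y\in A\}$, and for $y\in\mathcal{C}$ let $P_{T|Y=y}$ denote the conditional distribution of $T$ given $\{Y=y\}$. Then $$\max_{\emptyset\neq A\subseteq \mathcal{C}} D\big(P_{T|Y\in A}\,\big\|\,P_{T}\big) \;=\; \max_{y\in \mathcal{C}} D\big(P_{T|Y=y}\,\big\|\,P_{T}\big),$$ where $P_T$ is the marginal distribution of $T$ and $D(\cdot\|\cdot)$ is the Kullback–Leibler divergence.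
   Context: $D(P\|Q)=\sum_{t\in\mathcal{T}}P(t)\log\frac{P(t)}{Q(t)}$ (with the conventions $0\log\frac{0}{q}=0$). In the paper, $Y$ is a class label and $T$ is the quantized output of a neuron of a neural network; the quantity $\max_{y} D(P_{T|Y=y}\|P_T)$ is called the Kullback–Leibler selectivity of the neuron. *)

(* Defs.v *)
From mathcomp Require Import all_boot all_order all_algebra.
From mathcomp Require Import all_classical all_reals all_analysis.
Set Implicit Arguments. Unset Strict Implicit. Unset Printing Implicit Defensive.
Import Order.TTheory GRing.Theory Num.Theory.
Local Open Scope ring_scope.

Definition KL {R : realType} {T : finType} (P Q : T -> R) : R :=
  \sum_(t : T) (if P t == 0 then 0 else P t * ln (P t / Q t)).

Definition probY {R : realType} {C T : finType} (P : {ffun C * T -> R})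
  (A : {set C}) : R := \sum_(y in A) \sum_(t : T) P (y, t).

Definition margT {R : realType} {C T : finType} (P : {ffun C * T -> R})
  (t : T) : R := \sum_(y : C) P (y, t).

Definition condT {R : realType} {C T : finType} (P : {ffun C * T -> R})
  (A : {set C}) (t : T) : R := (\sum_(y in A) P (y, t)) / probY P A.

Definition is_max_over {R : realType} {I : finType} (S : pred I) (f : I -> R)
  (v : R) : Prop := (exists2 i, S i & f i = v) /\ (forall i, S i -> f i <= v).

(* Main.v *)
Require Import Defs.
From mathcomp Require Import all_boot all_order all_algebra.
From mathcomp Require Import all_classical all_reals all_analysis.
From mathcomp Require Import ring lra.
Import Order.TTheory GRing.Theory Num.Theory.
Local Open Scope ring_scope.

Lemma ln_ge (R : realType) (x : R) : 0 < x -> 1 - x^-1 <= ln x.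
Proof.
move=> x0.
have h : -1 < x^-1 - 1 by rewrite ltrBrDr addNr invr_gt0.
have := le_ln1Dx h.
rewrite addrCA subrr addr0 lnV ?posrE // => H.
lra.
Qed.

Lemma term_ge (R : realType) (a b A B : R) : 0 < a -> 0 < b -> 0 < A -> 0 < B ->
  a * ln (A / B) + a - b * (A / B) <= a * ln (a / b).
Proof.
move=> a0 b0 A0 B0.
have e : a / b = (A / B) * (a * B / (b * A)) by field; rewrite ?gt_eqF.
have -> : ln (a / b) = ln (A / B) + ln (a * B / (b * A)).
  by rewrite e; apply: lnM; rewrite posrE ?divr_gt0 ?mulr_gt0.
have := @ln_ge _ _ (divr_gt0 (mulr_gt0 a0 B0) (mulr_gt0 b0 A0)).
rewrite invf_div => H.
have H2 : a * (1 - b * A / (a * B)) <= a * ln (a * B / (b * A)) by rewrite ler_pM2l.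
have E2 : a * (1 - b * A / (a * B)) = a - b * (A / B) by field; rewrite ?gt_eqF.
rewrite E2 in H2.
rewrite mulrDr -addrA lerD2l.
exact: H2.
Qed.

Lemma logsum (R : realType) (I : finType) (r : pred I) (a b : I -> R) :
  (forall i, r i -> 0 <= a i) -> (forall i, r i -> 0 < b i) ->
  0 < \sum_(i | r i) b i ->
  (if \sum_(i | r i) a i == 0 then 0 else
     (\sum_(i | r i) a i) * ln ((\sum_(i | r i) a i) / \sum_(i | r i) b i))
  <= \sum_(i | r i) (if a i == 0 then 0 else a i * ln (a i / b i)).
Proof.
move=> a0 b0 B0.
set A := \sum_(i | r i) a i; set B := \sum_(i | r i) b i.
have A0 : 0 <= A by apply: sumr_ge0.
case: ifP => [/eqP HA | /negbT nA].
  apply: sumr_ge0 => i ri.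
  by rewrite (psumr_eq0P a0 HA) // eqxx.
have Ap : 0 < A by rewrite lt_def nA.
apply: (@le_trans _ _ (\sum_(i | r i) (a i * ln (A / B) + a i - b i * (A / B)))).
  rewrite big_split /= big_split /= sumrN -!mulr_suml -/A -/B.
  rewrite mulrCA divff ?gt_eqF // mulr1 addrK //.
apply: ler_sum => i ri.
case: eqP => [->|/eqP nai].
  rewrite mul0r !add0r oppr_le0; apply: mulr_ge0; first exact/ltW/b0.
  by apply: divr_ge0 => //; apply: ltW.
apply: term_ge => //; last exact: b0.
by rewrite lt_def nai a0.
Qed.

Lemma scale_phi (R : realType) (s x q : R) : 0 < s ->
  s * (if x / s == 0 then 0 else x / s * ln (x / s / q)) =
  if x == 0 then 0 else x * ln (x / (s * q)).
Proof.
move=> s0.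
rewrite mulf_eq0 invr_eq0 (gt_eqF s0) orbF.
case: eqP => _; first by rewrite mulr0.
by rewrite mulrA mulrCA divff ?gt_eqF // mulr1 invfM mulrA.
Qed.

Lemma probY1 (R : realType) (C T : finType) (P : {ffun C * T -> R}) y :
  probY P [set y] = \sum_t P (y, t).
Proof. by rewrite /probY big_set1. Qed.

Lemma key (R : realType) (C T : finType) (P : {ffun C * T -> R})
  (P_ge0 : forall yt, 0 <= P yt)
  (PY_gt0 : forall y : C, 0 < probY P [set y]) (A : {set C}) (v : R) :
  A != finset.set0 ->
  (forall y, y \in A -> KL (condT P [set y]) (margT P) <= v) ->
  KL (condT P A) (margT P) <= v.
Proof.
move=> An0 Hv.
set s := fun y => probY P [set y].
have sE : probY P A = \sum_(y in A) s y.
  by apply: eq_bigr => y _; rewrite /s probY1.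
set S := probY P A.
have S0 : 0 < S.
  case/set0Pn: An0 => y0 yA.
  rewrite /S sE (bigD1 y0) //=; apply: ltr_pwDl; first exact: PY_gt0.
  by apply: sumr_ge0 => y _; apply: ltW; apply: PY_gt0.
set q := margT P.
pose g y t := if P (y, t) == 0 then 0 else P (y, t) * ln (P (y, t) / (s y * q t)).
have claim1 : forall y, s y * KL (condT P [set y]) q = \sum_t g y t.
  move=> y; rewrite /KL mulr_sumr; apply: eq_bigr => t _.
  by rewrite /condT big_set1 -/(s y) scale_phi //; apply: PY_gt0.
have claim2 : forall t, S * (if condT P A t == 0 then 0
      else condT P A t * ln (condT P A t / q t)) <= \sum_(y in A) g y t.
  move=> t; rewrite /condT -/S scale_phi //.
  have q0 : 0 <= q t by apply: sumr_ge0.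
  have [qz|qnz] := eqVneq (q t) 0.
    have Pz : forall y, P (y, t) = 0.
      by move=> y; apply: (psumr_eq0P (fun i _ => P_ge0 (i, t)) qz).
    rewrite big1 ?eqxx; last by move=> y _; rewrite Pz.
    by apply: sumr_ge0 => y _; rewrite /g Pz eqxx.
  have qp : 0 < q t by rewrite lt_def qnz q0.
  have := @logsum R C (fun y => y \in A) (fun y => P (y, t)) (fun y => s y * q t).
  rewrite -mulr_suml -sE -/S; apply.
  - by move=> i _.
  - by move=> i _; apply: mulr_gt0 => //; apply: PY_gt0.
  - exact: mulr_gt0.
apply: (@le_trans _ _ (S^-1 * (S * v))); last by rewrite mulrA mulVf ?gt_eqF // mul1r.
rewrite -(@ler_pM2l _ S) // mulrA divff ?gt_eqF // mul1r.
rewrite /KL mulr_sumr.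
apply: (le_trans (ler_sum _ (fun t _ => claim2 t))).
rewrite exchange_big /= /S sE mulr_suml.
apply: ler_sum => y yA.
rewrite -claim1 ler_pM2l; first exact: Hv.
exact: PY_gt0.
Qed.

Theorem lemma1 (R : realType) (C T : finType) (P : {ffun C * T -> R})
  (P_ge0 : forall yt, 0 <= P yt)
  (P_sum1 : \sum_(yt : C * T) P yt = 1)
  (PY_gt0 : forall y : C, 0 < probY P [set y]) :
  forall v : R,
    is_max_over (fun A : {set C} => A != finset.set0)
      (fun A => KL (condT P A) (margT P)) v
    <->
    is_max_over (fun _ : C => true)
      (fun y => KL (condT P [set y]) (margT P)) v.
Proof.
have n1 : forall y : C, [set y] != finset.set0.
  by move=> y; apply/set0Pn; exists y; rewrite finset.in_set1.
move=> v; split.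
  case=> [[A0 nA0 eA0] Hall].
  have Hy : forall y, KL (condT P [set y]) (margT P) <= v.
    by move=> y; apply: Hall.
  case/set0Pn: (nA0) => y0 yA0.
  case: (@arg_maxP _ _ _ y0 (mem A0)
           (fun y => KL (condT P [set y]) (margT P)) yA0) => ys ysA Hmax.
  split; last by move=> y _; apply: Hy.
  exists ys => //.
  apply/eqP; rewrite eq_le Hy /= -eA0.
  by apply: key => // y yA; apply: Hmax.
case=> [[y0 _ ey0] Hall].
split.
  by exists [set y0] => //; apply: n1.
move=> A nA; apply: key => // y _.
exact: Hall.
Qed.
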